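(* Let $M$ be a monoid of binary relations on a finite set $Q$ and let $e,e'\in M$ be $\mathcal D$-equivalent idempotents. Then the permutation groups $G_e$ and $G_{e'}$ are equivalent.
   Context: Monoid of relations: set of relations on $Q$ containing the identity and closed under composition $mn=\{(p,q)\mid\exists r,(p,r)\in m,(r,q)\in n\}$. $\mathcal D$ is Green's relation $\mathcal L\mathcal R=\mathcal R\mathcal L$ in $M$. For an idempotent $e$, $H(e)$ is its $\mathcal H$-class (a group with identity $e$, inverses denoted $m^{-1}$), $\Gamma_e$ is the set of strongly connected components of the restriction of $e$ to its fixed points $\{q\mid (q,q)\in e\}$, and for $m\in H(e)$, $\gamma_e(m)=\{(\rho,\sigma)\in\Gamma_e^2\mid (r,s)\in m,(s,r)\in m^{-1}\text{ for some }r\in\rho,s\in\sigma\}$; $\gamma_e$ is an injective morphism into permutations of $\Gamma_e$, and $G_e=\gamma_e(H(e))$, a permutation group on $\Gamma_e$. Two permutation groups $G$ on $S$ and $G'$ on $S'$ are equivalent if there are a bijection $\theta:S\to S'$ and a group isomorphism $\alpha:G\to G'$ with $\theta(g(s))=\alpha(g)(\theta(s))$ for all $g\in G$, $s\in S$. *)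

(* Defs.v *)
From mathcomp Require Import all_boot.

Set Implicit Arguments. Unset Strict Implicit. Unset Printing Implicit Defensive.

Section Rel.
Variable T : finType.

Definition rcomp (m n : {set T * T}) : {set T * T} :=
  [set pq | [exists r, ((pq.1, r) \in m) && ((r, pq.2) \in n)]].

Definition rid : {set T * T} := [set pq : T * T | pq.1 == pq.2].
End Rel.

Section Monoid.
Variable Q : finType.
Variable M : {set {set Q * Q}}.

Definition is_rel_monoid : Prop :=
  rid Q \in M /\ {in M &, forall m n, rcomp m n \in M}.

(* Green's relations in M: a R b iff aM^1 = bM^1 (M is a monoid) *)
Definition Rrel (a b : {set Q * Q}) : bool :=
  [exists x in M, exists y in M, (a == rcomp b x) && (b == rcomp a y)].
Definition Lrel (a b : {set Q * Q}) : bool :=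
  [exists x in M, exists y in M, (a == rcomp x b) && (b == rcomp y a)].
Definition Hrel (a b : {set Q * Q}) : bool := Rrel a b && Lrel a b.
Definition Drel (a b : {set Q * Q}) : bool :=
  [exists c in M, Lrel a c && Rrel c b].

Definition rel_idem (e : {set Q * Q}) : bool := rcomp e e == e.

Definition Hclass (e : {set Q * Q}) : {set {set Q * Q}} :=
  [set m in M | Hrel m e].

Definition Hinv (e m n : {set Q * Q}) : bool :=
  [&& n \in Hclass e, rcomp m n == e & rcomp n m == e].

Definition fixpts (e : {set Q * Q}) : {set Q} := [set q | (q, q) \in e].

Definition erestr (e : {set Q * Q}) : rel Q :=
  fun p q => [&& p \in fixpts e, q \in fixpts e & (p, q) \in e].

Definition Gamma (e : {set Q * Q}) : {set {set Q}} :=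
  [set [set q in fixpts e | connect (erestr e) p q && connect (erestr e) q p]
     | p in fixpts e].

Definition gamma (e m : {set Q * Q}) : {set {set Q} * {set Q}} :=
  [set rs | [&& rs.1 \in Gamma e, rs.2 \in Gamma e &
     [exists n, Hinv e m n &&
        [exists r in rs.1, exists s in rs.2, ((r, s) \in m) && ((s, r) \in n)]]]].

Definition Gperm (e : {set Q * Q}) : {set {set {set Q} * {set Q}}} :=
  [set gamma e m | m in Hclass e].
End Monoid.

(* Equivalence of permutation groups G on A and G' on B (group elements are
   represented as (functional, bijective) relations; the group law is
   composition of relations). theta(g(s)) = alpha(g)(theta(s)) is expressed
   as (s,t) in g <-> (theta s, theta t) in alpha g, for s,t in A. *)
Definition perm_group_equiv (T S : finType) (A : {set T}) (G : {set {set T * T}})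
    (B : {set S}) (G' : {set {set S * S}}) : Prop :=
  exists (theta : T -> S) (alpha : {set T * T} -> {set S * S}),
    [/\ {in A &, injective theta}, theta @: A = B,
        {in G &, injective alpha}, alpha @: G = G' &
        [/\
        {in G &, forall g h, alpha (rcomp g h) = rcomp (alpha g) (alpha h)} &
        {in G, forall g : {set T * T}, {in A &, forall s t,
            ((s, t) \in g) = ((theta s, theta t) \in alpha g)}}]].

(* Main.v *)
Require Import Defs.
From mathcomp Require Import all_boot.
Set Implicit Arguments. Unset Strict Implicit. Unset Printing Implicit Defensive.

Lemma rcompP (T : finType) (m n : {set T * T}) p q :
  reflect (exists r, (p, r) \in m /\ (r, q) \in n) ((p, q) \in rcomp m n).
Proof.
rewrite /rcomp inE /=; apply: (iffP existsP).
- by move=> [r /andP[H1 H2]]; exists r.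
- by move=> [r [H1 H2]]; exists r; rewrite H1 H2.
Qed.

Lemma rcompA (T : finType) (x y z : {set T * T}) :
  rcomp (rcomp x y) z = rcomp x (rcomp y z).
Proof.
apply/setP => -[p q]; apply/rcompP/rcompP.
- move=> [r [/rcompP[s [H1 H2]] H3]]; exists s; split=> //; apply/rcompP; by exists r.
- move=> [s [H1 /rcompP[r [H2 H3]]]]; exists r; split=> //; apply/rcompP; by exists s.
Qed.

Lemma mem2 (T : finType) (x y : {set T * T}) p r q :
  (p, r) \in x -> (r, q) \in y -> (p, q) \in rcomp x y.
Proof. by move=> H1 H2; apply/rcompP; exists r. Qed.

Lemma mem3 (T : finType) (x y z : {set T * T}) p r s q :
  (p, r) \in x -> (r, s) \in y -> (s, q) \in z -> (p, q) \in rcomp (rcomp x y) z.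
Proof. by move=> H1 H2 H3; apply: mem2 H3; apply: mem2 H2. Qed.

Lemma etrans (T : finType) (e : {set T * T}) p q r :
  rcomp e e = e -> (p, q) \in e -> (q, r) \in e -> (p, r) \in e.
Proof. by move=> He H1 H2; rewrite -He; apply: mem2 H2. Qed.

Section Main.
Variable Q : finType.
Implicit Types (e m n a : {set Q * Q}) (M : {set {set Q * Q}}).

Lemma rcomp_in M x y : is_rel_monoid M -> x \in M -> y \in M -> rcomp x y \in M.
Proof. by move=> [_ H]; apply: H. Qed.

Lemma Hclass_l M e m : rcomp e e = e -> m \in Hclass M e -> rcomp e m = m.
Proof.
move=> He; rewrite inE => /andP[_ /andP[/existsP[x /andP[_ /existsP[y /andP[_ /andP[/eqP Hm _]]]]] _]].
by rewrite Hm -rcompA He.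
Qed.

Lemma Hclass_r M e m : rcomp e e = e -> m \in Hclass M e -> rcomp m e = m.
Proof.
move=> He; rewrite inE => /andP[_ /andP[_ /existsP[x /andP[_ /existsP[y /andP[_ /andP[/eqP Hm _]]]]]]].
by rewrite Hm rcompA He.
Qed.

Definition setup M e e' a a' : Prop :=
  [/\ is_rel_monoid M, [/\ e \in M, e' \in M, a \in M & a' \in M],
      (rcomp e e = e /\ rcomp e' e' = e'),
      [/\ rcomp a a' = e, rcomp a' a = e' & rcomp e a = a] &
      [/\ rcomp a e' = a, rcomp a' e = a' & rcomp e' a' = a']].

Lemma setup_sym M e e' a a' : setup M e e' a a' -> setup M e' e a' a.
Proof. by case=> H1 [? ? ? ?] [? ?] [? ? ?] [? ? ?]; split. Qed.

Definition tr a a' m := rcomp (rcomp a' m) a.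

Lemma tr_H M e e' a a' m : setup M e e' a a' ->
  m \in Hclass M e -> tr a a' m \in Hclass M e'.
Proof.
case=> HM [eM e'M aM a'M] [He He'] [Haa' Ha'a Hea] [Hae' Ha'e He'a'] Hm.
have Hme := Hclass_r He Hm; have Hem := Hclass_l He Hm.
move: Hm; rewrite inE => /andP[mM /andP[/existsP[x1 /andP[x1M /existsP[y1 /andP[y1M /andP[/eqP Hm1 /eqP He1]]]]]
   /existsP[x2 /andP[x2M /existsP[y2 /andP[y2M /andP[/eqP Hm2 /eqP He2]]]]]]].
have trM : forall z, z \in M -> tr a a' z \in M.
  by move=> z zM; rewrite /tr; do 2 (apply: rcomp_in => //).
rewrite inE trM //=; apply/andP; split; apply/existsP.
- exists (tr a a' m); rewrite trM //=; apply/existsP; exists (tr a a' y1).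
  rewrite trM //=; apply/andP; split; apply/eqP.
  + by rewrite /tr -!rcompA He'a'.
  + rewrite /tr !rcompA -(rcompA a a') Haa' -(rcompA m e) Hme -(rcompA m y1) -He1.
    by rewrite Hea Ha'a.
- exists (tr a a' m); rewrite trM //=; apply/existsP; exists (tr a a' y2).
  rewrite trM //=; apply/andP; split; apply/eqP.
  + by rewrite /tr !rcompA Hae'.
  + rewrite /tr !rcompA -(rcompA a a') Haa' -(rcompA e m) Hem -(rcompA y2 m) -He2.
    by rewrite Hea Ha'a.
Qed.

Lemma tr_Hinv M e e' a a' m n : setup M e e' a a' ->
  Hinv M e m n -> Hinv M e' (tr a a' m) (tr a a' n).
Proof.
move=> S; have [HM _ [He He'] [Haa' Ha'a Hea] _] := S.
case/and3P=> Hn /eqP Hmn /eqP Hnm.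
rewrite /Hinv (tr_H S Hn) /=; apply/andP; split; apply/eqP.
- rewrite /tr !rcompA -(rcompA a a') Haa' -(rcompA e n) (Hclass_l He Hn).
  by rewrite -(rcompA m n) Hmn Hea Ha'a.
- rewrite /tr !rcompA -(rcompA a a') Haa' -(rcompA n e) (Hclass_r He Hn).
  by rewrite -(rcompA n m) Hnm Hea Ha'a.
Qed.

Lemma trK M e e' a a' m : setup M e e' a a' -> m \in Hclass M e ->
  tr a' a (tr a a' m) = m.
Proof.
move=> S Hm; have [HM _ [He He'] [Haa' Ha'a Hea] _] := S.
rewrite /tr !rcompA Haa' (Hclass_r He Hm) -rcompA Haa'.
exact: (Hclass_l He Hm).
Qed.

Definition comp e p : {set Q} :=
  [set q in fixpts e | connect (erestr e) p q && connect (erestr e) q p].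

Lemma GammaE e : Gamma e = [set comp e p | p in fixpts e].
Proof. by []. Qed.


Lemma conn_e e p q : rcomp e e = e -> p \in fixpts e ->
  connect (erestr e) p q -> (p, q) \in e.
Proof.
move=> He Hp /connectP[s Hs ->].
have Hpp: (p, p) \in e by move: Hp; rewrite inE.
have: forall x, (p, x) \in e -> path (erestr e) x s -> (p, last x s) \in e.
  elim: s {Hs} => [//|y s IH] x Hx /= /andP[/and3P[_ _ Hxy] Hp'].
  apply: IH Hp'; exact: etrans He Hx Hxy.
by move=> /(_ p Hpp Hs).
Qed.

Lemma e_conn e p q : p \in fixpts e -> q \in fixpts e -> (p, q) \in e ->
  connect (erestr e) p q.
Proof. by move=> Hp Hq H; apply: connect1; rewrite /erestr Hp Hq H. Qed.

Lemma in_comp e p q : rcomp e e = e -> p \in fixpts e ->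
  (q \in comp e p) = [&& q \in fixpts e, (p, q) \in e & (q, p) \in e].
Proof.
move=> He Hp; rewrite inE; case Hq: (q \in fixpts e) => //=.
apply/andP/andP=> [[H1 H2]|[H1 H2]]; split.
- exact: conn_e H1.
- exact: conn_e H2.
- exact: e_conn.
- exact: e_conn.
Qed.

Lemma comp_self e p : rcomp e e = e -> p \in fixpts e -> p \in comp e p.
Proof. by move=> He Hp; rewrite in_comp // Hp; move: Hp; rewrite inE => ->. Qed.

Lemma comp_eq e p q : rcomp e e = e -> p \in fixpts e -> q \in fixpts e ->
  (p, q) \in e -> (q, p) \in e -> comp e p = comp e q.
Proof.
move=> He Hp Hq H1 H2; apply/setP => z; rewrite !in_comp //.
case Hz: (z \in fixpts e) => //=; apply/andP/andP=> [[A B]|[A B]]; split.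
- exact: etrans A.
- exact: etrans H1.
- exact: etrans A.
- exact: etrans H2.
Qed.

Lemma Gamma_mem e rho r : rcomp e e = e -> rho \in Gamma e -> r \in rho ->
  r \in fixpts e /\ comp e r = rho.
Proof.
move=> He /imsetP[p Hp ->] Hr.
have := Hr; rewrite -/(comp e p) in_comp // => /and3P[Hrf H1 H2].
by split=> //; apply: comp_eq.
Qed.

Lemma Gamma_ne e rho : rho \in Gamma e -> exists r, r \in rho.
Proof.
move=> /imsetP[p Hp ->]; exists p; rewrite inE Hp /=.
by rewrite connect0.
Qed.

Lemma Gamma_sub e rho r : rcomp e e = e -> rho \in Gamma e -> r \in rho ->
  (r, r) \in e.
Proof. by move=> He Hrho Hr; have [] := Gamma_mem He Hrho Hr; rewrite inE. Qed.

Definition theta e' a a' (rho : {set Q}) : {set Q} :=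
  if [pick r in rho] is Some r then
    if [pick s | ((r, s) \in a) && ((s, r) \in a')] is Some s then comp e' s
    else set0
  else set0.

Lemma exists_s M e e' a a' r : setup M e e' a a' -> (r, r) \in e ->
  exists s, [/\ (r, s) \in a, (s, r) \in a' & s \in fixpts e'].
Proof.
case=> _ _ _ [Haa' Ha'a _] _; rewrite -Haa' => /rcompP[s [H1 H2]].
by exists s; split=> //; rewrite inE -Ha'a; exact: mem2 H2 H1.
Qed.

Lemma theta_spec M e e' a a' rho r s : setup M e e' a a' ->
  rho \in Gamma e -> r \in rho -> (r, s) \in a -> (s, r) \in a' ->
  theta e' a a' rho = comp e' s.
Proof.
move=> S Hrho Hr Hrs Hsr; have [_ _ [He He'] [Haa' Ha'a _] [Hae' Ha'e _]] := S.
rewrite /theta; case: pickP => [r0 Hr0|H]; last by move: (H r); rewrite Hr.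
have [Hr0f E0] := Gamma_mem He Hrho Hr0.
have [Hrf E1] := Gamma_mem He Hrho Hr.
have Hr0r : (r0, r) \in e by have := Hr; rewrite -E0 in_comp // => /and3P[].
have Hrr0 : (r, r0) \in e by have := Hr; rewrite -E0 in_comp // => /and3P[].
case: pickP => [s0 /andP[H1 H2]|H]; last first.
  have [s' [H1 H2 _]] := exists_s S (Gamma_sub He Hrho Hr0).
  by move: (H s'); rewrite H1 H2.
have sf : s \in fixpts e' by rewrite inE -Ha'a; exact: mem2 Hsr Hrs.
have s0f : s0 \in fixpts e' by rewrite inE -Ha'a; exact: mem2 H2 H1.
apply: comp_eq => //.
- by rewrite -Ha'a -Ha'e; exact: mem3 H2 Hr0r Hrs.
- by rewrite -Ha'a -Ha'e; exact: mem3 Hsr Hrr0 H1.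
Qed.

Lemma theta_in M e e' a a' rho : setup M e e' a a' ->
  rho \in Gamma e -> theta e' a a' rho \in Gamma e'.
Proof.
move=> S Hrho; have [_ _ [He _] _ _] := S.
have [r Hr] := Gamma_ne Hrho.
have [s [H1 H2 H3]] := exists_s S (Gamma_sub He Hrho Hr).
by rewrite (theta_spec S Hrho Hr H1 H2) GammaE imset_f.
Qed.

Lemma theta_inv M e e' a a' rho : setup M e e' a a' ->
  rho \in Gamma e -> theta e a' a (theta e' a a' rho) = rho.
Proof.
move=> S Hrho; have [_ _ [He He'] _ _] := S.
have [r Hr] := Gamma_ne Hrho.
have [s [H1 H2 H3]] := exists_s S (Gamma_sub He Hrho Hr).
rewrite (theta_spec S Hrho Hr H1 H2).
rewrite (theta_spec (setup_sym S) _ (comp_self He' H3) H2 H1).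
  by have [] := Gamma_mem He Hrho Hr.
by rewrite GammaE imset_f.
Qed.

Definition alpha (th : {set Q} -> {set Q}) (g : {set {set Q} * {set Q}}) :
  {set {set Q} * {set Q}} := [set (th x.1, th x.2) | x in g].

Definition subAA (A : {set {set Q}}) (g : {set {set Q} * {set Q}}) :=
  forall x, x \in g -> (x.1 \in A) && (x.2 \in A).

Lemma alpha_mem (A : {set {set Q}}) (th : {set Q} -> {set Q}) (g : {set {set Q} * {set Q}}) (s t : {set Q}) : {in A &, injective th} -> subAA A g ->
  s \in A -> t \in A -> ((s, t) \in g) = ((th s, th t) \in alpha th g).
Proof.
move=> Hi Hg Hs Ht; apply/idP/idP => [H|/imsetP[x Hx [E1 E2]]].
  by apply/imsetP; exists (s, t).
have /andP[H1 H2] := Hg x Hx.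
by rewrite (Hi _ _ Hs H1 E1) (Hi _ _ Ht H2 E2); case: x Hx {E1 E2 H1 H2}.
Qed.

Lemma alpha_comp (A : {set {set Q}}) (th : {set Q} -> {set Q}) (g h : {set {set Q} * {set Q}}) : {in A &, injective th} -> subAA A g -> subAA A h ->
  alpha th (rcomp g h) = rcomp (alpha th g) (alpha th h).
Proof.
move=> Hi Hg Hh; apply/setP => -[p q]; apply/idP/idP.
- move=> /imsetP[[x z] /rcompP[y [H1 H2]] [-> ->]] /=.
  by apply: (@mem2 _ _ _ _ (th y)); apply/imsetP; [exists (x, y)|exists (y, z)].
- move=> /rcompP[r [/imsetP[[x y] Hxy [-> ->]] /imsetP[[y' z] Hyz [E ->]]]] /=.
  have /andP[_ Hy] := Hg _ Hxy; have /andP[Hy' _] := Hh _ Hyz.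
  move: E => /= E.
  have E' : y = y' := Hi _ _ Hy Hy' E.
  rewrite -E' in Hyz.
  by apply/imsetP; exists (x, z) => //; exact: mem2 Hxy Hyz.
Qed.

Lemma alpha_inj (A : {set {set Q}}) (th : {set Q} -> {set Q}) (g h : {set {set Q} * {set Q}}) : {in A &, injective th} -> subAA A g -> subAA A h ->
  alpha th g = alpha th h -> g = h.
Proof.
move=> Hi Hg Hh E; apply/setP => -[s t].
case Hst: ((s, t) \in g).
  have /andP[Hs Ht] := Hg _ Hst.
  by rewrite (alpha_mem Hi Hh Hs Ht) -E -(alpha_mem Hi Hg Hs Ht).
case Hst': ((s, t) \in h) => //.
have /andP[Hs Ht] := Hh _ Hst'.
by rewrite -Hst (alpha_mem Hi Hg Hs Ht) E -(alpha_mem Hi Hh Hs Ht).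
Qed.

Lemma gamma_sub M e m : subAA (Gamma e) (gamma M e m).
Proof. by move=> x; rewrite inE => /and3P[-> ->]. Qed.

Lemma gamma_fwd M e e' a a' m rho1 rho2 : setup M e e' a a' ->
  (rho1, rho2) \in gamma M e m ->
  (theta e' a a' rho1, theta e' a a' rho2) \in gamma M e' (tr a a' m).
Proof.
move=> S; have [_ _ [He He'] _ _] := S.
rewrite inE /= => /and3P[G1 G2 /existsP[n /andP[Hn /existsP[r /andP[Hr
   /existsP[s /andP[Hs /andP[Hrs Hsr]]]]]]]].
have [r' [H1 H2 H3]] := exists_s S (Gamma_sub He G1 Hr).
have [s' [H4 H5 H6]] := exists_s S (Gamma_sub He G2 Hs).
rewrite inE /= !(theta_in S) //=.
apply/existsP; exists (tr a a' n); rewrite (tr_Hinv S Hn) /=.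
apply/existsP; exists r'; rewrite (theta_spec S G1 Hr H1 H2) comp_self //=.
apply/existsP; exists s'; rewrite (theta_spec S G2 Hs H4 H5) comp_self //=.
by rewrite /tr (mem3 H2 Hrs H4) (mem3 H5 Hsr H1).
Qed.

Lemma gamma_eq M e e' a a' m : setup M e e' a a' -> m \in Hclass M e ->
  alpha (theta e' a a') (gamma M e m) = gamma M e' (tr a a' m).
Proof.
move=> S Hm; have S' := setup_sym S; apply/setP => y; apply/idP/idP.
- by move=> /imsetP[[r1 r2] Hx ->]; exact: gamma_fwd S Hx.
- case: y => s1 s2 Hy.
  have /andP[G1 G2] := gamma_sub Hy.
  have := gamma_fwd S' Hy; rewrite (trK S Hm) => Hy'.
  apply/imsetP; exists (theta e a' a s1, theta e a' a s2) => //=.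
  by rewrite !(theta_inv S').
Qed.

End Main.

Theorem mainTheorem9 (Q : finType) (M : {set {set Q * Q}}) (e e' : {set Q * Q}) :
  is_rel_monoid M ->
  e \in M -> e' \in M ->
  rel_idem e -> rel_idem e' ->
  Drel M e e' ->
  perm_group_equiv (Gamma e) (Gperm M e) (Gamma e') (Gperm M e').
Proof.
move=> HM eM e'M /eqP He /eqP He' /existsP[c /andP[cM /andP[
  /existsP[x /andP[xM /existsP[y /andP[yM /andP[/eqP Hxc /eqP Hye]]]]]
  /existsP[u /andP[uM /existsP[v /andP[vM /andP[/eqP Hu /eqP Hv]]]]]]]].
have Hce : rcomp c e = c by rewrite Hye rcompA He.
have He'c : rcomp e' c = c by rewrite Hu -rcompA He'.
have Hca : rcomp c (rcomp x e') = e'.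
  by rewrite {1}Hv -(rcompA x c) -Hxc -rcompA Hce -Hv.
have S : setup M e e' (rcomp x e') c.
  split=> //.
  - by split=> //; apply: rcomp_in.
  - split=> //.
    + by rewrite rcompA He'c -Hxc.
    + by rewrite Hxc rcompA Hca.
  - by split=> //; rewrite rcompA He'.
set a := rcomp x e' in S *; set a' := c in S *.
have S' := setup_sym S.
have Hi : {in Gamma e &, injective (theta e' a a')}.
  by move=> p q Hp Hq E; rewrite -(theta_inv S Hp) -(theta_inv S Hq) E.
have GsubG : forall g, g \in Gperm M e -> subAA (Gamma e) g.
  by move=> g /imsetP[m _ ->]; apply: gamma_sub.
exists (theta e' a a'), (alpha (theta e' a a')); split=> //.
- apply/setP => z; apply/imsetP/idP => [[w Hw ->]|Hz].
    exact: theta_in S Hw.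
  exists (theta e a' a z); first exact: theta_in S' Hz.
  by rewrite (theta_inv S').
- move=> g h Hg Hh; exact: alpha_inj Hi (GsubG _ Hg) (GsubG _ Hh).
- apply/setP => z; apply/imsetP/imsetP.
  + move=> [g /imsetP[m Hm ->] ->]; exists (tr a a' m); first exact: tr_H S Hm.
    exact: gamma_eq.
  + move=> [m' Hm' ->]; exists (gamma M e (tr a' a m')).
      by apply: imset_f; apply: tr_H S' Hm'.
    by rewrite (gamma_eq S (tr_H S' Hm')) (trK S' Hm').
- split.
  + move=> g h Hg Hh; exact: alpha_comp Hi (GsubG _ Hg) (GsubG _ Hh).
  + move=> g Hg s t Hs Ht; exact: alpha_mem Hi (GsubG _ Hg) Hs Ht.
Qed.
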